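(* Let $n,k,d\in\mathbb N$ satisfy $n\ge 60k$ and $k\ge 4d$. Let $T$ be a tree with $n$ vertices and at most $n/(5d)$ leaves. Then $T$ contains either a $2d$-separated set of at least $n/(40k)$ leaves, or a collection of at least $n/(40k)$ vertex-disjoint bare paths each of length $k$.
   Context: A path with $\ell$ vertices has length $\ell-1$. A bare path in a tree $T$ is a path in $T$ all of whose interior vertices have degree exactly $2$ in $T$. A vertex set $Q$ is $k$-separated in $T$ if every two distinct vertices of $Q$ are at distance at least $k$ in $T$. *)

(* Defs.v *)
From mathcomp Require Import all_boot.
Set Implicit Arguments. Unset Strict Implicit. Unset Printing Implicit Defensive.

Definition simple_graph (V : finType) (e : rel V) : Prop :=
  symmetric e /\ irreflexive e.

Definition deg (V : finType) (e : rel V) (x : V) : nat := #|[set y | e x y]|.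

(* a (graph) path: nonempty sequence of distinct vertices, consecutive ones
   adjacent; its length is (number of vertices) - 1 *)
Definition is_gpath (V : finType) (e : rel V) (s : seq V) : bool :=
  if s is x :: p then path e x p && uniq s else false.

Definition is_gcycle (V : finType) (e : rel V) (s : seq V) : bool :=
  (2 < size s) && cycle e s && uniq s.

Definition connected_graph (V : finType) (e : rel V) : Prop :=
  forall x y : V, exists p : seq V, path e x p /\ last x p = y.

Definition is_tree (V : finType) (e : rel V) : Prop :=
  simple_graph e /\ connected_graph e /\ forall s : seq V, ~~ is_gcycle e s.

Definition is_leaf (V : finType) (e : rel V) (x : V) : bool := deg e x == 1.

Definition leaves (V : finType) (e : rel V) : {set V} := [set x | is_leaf e x].

Definition dist_ge (V : finType) (e : rel V) (x y : V) (m : nat) : Prop :=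
  forall p : seq V, path e x p -> last x p = y -> m <= size p.

Definition separated (V : finType) (e : rel V) (k : nat) (Q : {set V}) : Prop :=
  forall x y, x \in Q -> y \in Q -> x != y -> dist_ge e x y k.

Definition is_bare_path (V : finType) (e : rel V) (s : seq V) : Prop :=
  is_gpath e s /\
  forall i, 0 < i -> i < (size s).-1 ->
    forall x0, deg e (nth x0 s i) = 2.

Definition disjoint_bare_paths (V : finType) (e : rel V) (k : nat)
    (P : seq (seq V)) : Prop :=
  (forall s, s \in P -> is_bare_path e s /\ size s = k.+1) /\
  (forall i j, i < size P -> j < size P -> i != j ->
     [disjoint (nth [::] P i) & (nth [::] P j)]).

(* Main.v *)
Require Import Defs.
From mathcomp Require Import all_boot zify.
Set Implicit Arguments. Unset Strict Implicit. Unset Printing Implicit Defensive.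

Section Tree.
Variables (V : finType) (e : rel V).
Hypothesis esym : symmetric e.
Hypothesis eirr : irreflexive e.
Hypothesis econn : connected_graph e.
Hypothesis eacyc : forall s : seq V, ~~ is_gcycle e s.

Lemma no_bypass v x y p : e v x -> e v y -> x != y -> path e x p ->
  last x p = y -> v \notin x :: p -> False.
Proof.
move=> evx evy xy px lx vnot.
move: lx; case: (shortenP px) => p' pp' up' sub' lx.
have := eacyc (v :: x :: p').
rewrite /is_gcycle /= evx rcons_path pp' lx (esym y v) evy /=.
have vp' : v \notin x :: p'.
  apply/negP => /[!inE] /orP[/eqP vx|vp]; move/negP: vnot; apply.
    by rewrite vx mem_head.
  by rewrite inE (sub' _ vp) orbT.
rewrite vp' /=; move: up'; rewrite /= => /andP[-> ->]; rewrite andbT.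
case: p' {pp' vp' sub'} lx => [/= xy'|//].
by move: xy; rewrite xy' eqxx.
Qed.

Variable r : V.

Definition drP (v : V) (n : nat) : bool :=
  [exists t : n.-tuple V, path e r t && (last r t == v)].

Lemma dr_ex v : exists n, drP v n.
Proof.
case: (econn r v) => p [pp lp]; exists (size p).
by apply/existsP; exists (in_tuple p); rewrite /= pp lp eqxx.
Qed.

Definition dr v := ex_minn (dr_ex v).

Lemma dr_walk v : exists t, [/\ path e r t, last r t = v & size t = dr v].
Proof.
rewrite /dr; case: ex_minnP => m /existsP[t /andP[pt /eqP lt]] _.
by exists t; rewrite size_tuple.
Qed.

Lemma dr_min v t : path e r t -> last r t = v -> dr v <= size t.
Proof.
move=> pt lt; rewrite /dr; case: ex_minnP => m _ /(_ (size t)); apply.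
by apply/existsP; exists (in_tuple t); rewrite /= pt lt eqxx.
Qed.

Lemma dr_r : dr r = 0.
Proof. by apply/eqP; rewrite -leqn0 (dr_min (t:=[::])). Qed.

Lemma dr0 v : dr v = 0 -> v = r.
Proof.
move=> d0; case: (dr_walk v) => [[|x t] [pt lt st]] //.
by rewrite d0 in st.
Qed.

Lemma dr_edge x y : e x y -> dr y <= (dr x).+1.
Proof.
move=> exy; case: (dr_walk x) => t [pt lt st].
rewrite -st -(size_rcons t y); apply: dr_min; last by rewrite last_rcons.
by rewrite rcons_path pt lt exy.
Qed.

Lemma dr_lt v : dr v < #|V|.
Proof.
case: (dr_walk v) => t [pt lt st].
move: lt; case: (shortenP pt) => p' pp' up' _ lp'.
apply: (@leq_ltn_trans (size p')); first exact: dr_min pp' lp'.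
have := max_card (mem (r :: p')); rewrite (card_uniqP up') /=; done.
Qed.

Lemma dr_pred v : v != r -> exists u, e u v /\ (dr u).+1 = dr v.
Proof.
move=> vr; case: (dr_walk v) => t [pt lt st].
case/lastP: t pt lt st => [|t' w]; first by move=> _ /= lt; rewrite lt eqxx in vr.
rewrite rcons_path last_rcons size_rcons => /andP[pt' ew] wv st; subst w.
exists (last r t'); split => //.
apply/eqP; rewrite eqn_leq dr_edge // andbT -st ltnS.
exact: dr_min.
Qed.

Lemma minwalk_avoid x v t : path e r t -> last r t = x -> size t = dr x ->
  dr x <= dr v -> v != x -> v \notin r :: t.
Proof.
move=> pt lt st dxv vx; apply/negP => vin.
move: pt lt st; case/splitPl: vin => t1 t2 lt1.
rewrite cat_path last_cat size_cat lt1 => /andP[p1 p2] l2 s12.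
have h1 := dr_min p1 lt1.
case: t2 p2 l2 s12 => [/= _ l2|y t2 _ _ s12]; first by rewrite l2 eqxx in vx.
move: h1 dxv; rewrite -s12 /=; lia.
Qed.

Lemma esym_eq a b : e a b -> e b a. Proof. by rewrite esym. Qed.

Lemma rev_walk x p : path e x p -> path e (last x p) (rev (belast x p)) /\
  last (last x p) (rev (belast x p)) = x.
Proof.
move=> px; split.
  rewrite rev_path; rewrite (eq_path (e' := e)) // => a b; exact: esym.
case/lastP: p {px} => [//|p y]; rewrite belast_rcons rev_cons last_rcons //.
Qed.

Lemma nbr_unique v x y : e v x -> e v y -> dr x <= dr v -> dr y <= dr v -> x = y.
Proof.
move=> evx evy dx dy; apply/eqP/negPn/negP => xy.
case: (dr_walk x) => tx [px lx sx]; case: (dr_walk y) => ty [py ly sy].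
have ax := minwalk_avoid px lx sx dx; have ay := minwalk_avoid py ly sy dy.
have [prx lrx] := rev_walk px; rewrite lx in prx lrx.
apply: (@no_bypass v x y (rev (belast r tx) ++ ty)) => //.
- by rewrite cat_path prx lrx py.
- by rewrite last_cat lrx ly.
have vx : v != x by apply/eqP => vx; rewrite vx eirr in evx.
have vy : v != y by apply/eqP => vy; rewrite vy eirr in evy.
rewrite inE negb_or vx /= mem_cat negb_or mem_rev.
have := ay vy; rewrite inE negb_or => /andP[_ ->]; rewrite andbT.
apply/negP => /mem_belast; apply/negP; exact: ax.
Qed.

Definition par v := odflt v [pick u | e v u && ((dr u).+1 == dr v)].

Lemma par_r : par r = r.
Proof. by rewrite /par; case: pickP => // u /andP[_]; rewrite dr_r. Qed.

Lemma par_edge v : v != r -> e v (par v) /\ (dr (par v)).+1 = dr v.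
Proof.
move=> vr; rewrite /par; case: pickP => [u /andP[? /eqP ?] //|none].
case: (dr_pred vr) => u [euv du].
by move: (none u); rewrite esym euv du eqxx.
Qed.

Lemma edge_par x y : e x y -> (y = par x /\ x != r) \/ (x = par y /\ y != r).
Proof.
move=> exy; case: (leqP (dr y) (dr x)) => h.
  have xr : x != r.
    apply/eqP => xr; subst x; move: h; rewrite dr_r leqn0 => /eqP/dr0 yr.
    by rewrite yr eirr in exy.
  left; split => //; have [ep dp] := par_edge xr.
  apply: (nbr_unique exy ep) => //; rewrite -dp; exact: leqnSn.
have yr : y != r by apply/eqP => yr; rewrite yr dr_r in h.
right; split => //; have [ep dp] := par_edge yr.
apply: (nbr_unique (esym_eq exy) ep); first exact: ltnW.
rewrite -dp; exact: leqnSn.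
Qed.


Definition children v := [set c | (c != r) && (par c == v)].

Lemma par_neq v : v != r -> par v != v.
Proof.
move=> vr; have [_ d] := par_edge vr; apply/eqP => h; rewrite h in d.
by move: d; rewrite -[X in _ = X]addn0 -addn1 => /eqP; rewrite eqn_add2l.
Qed.

Lemma deg_children v : deg e v = #|children v| + (v != r).
Proof.
rewrite /deg; case: (eqVneq v r) => [->|vr].
  rewrite addn0; apply: eq_card => y; rewrite !inE.
  apply/idP/idP.
    by case/edge_par => [[_ /eqP //]|[-> ->]]; rewrite eqxx.
  case/andP => yr /eqP <-; have [ep _] := par_edge yr; exact: esym_eq.
have -> : [set y | e v y] = par v |: children v.
  apply/setP => y; rewrite !inE; apply/idP/idP.
    by case/edge_par => [[-> _]|[-> ->]]; rewrite ?eqxx ?orbT.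
  case/orP => [/eqP ->|/andP[yr /eqP <-]]; first by have [] := par_edge vr.
  have [ep _] := par_edge yr; exact: esym_eq.
rewrite cardsU1 addnC; congr (_ + _).
suff -> : (par v \in children v) = false by []. apply/negP; rewrite inE => /andP[pr /eqP pp].
have [_ d1] := par_edge vr; have [_ d2] := par_edge pr; rewrite pp in d2; lia.
Qed.

Lemma sum_children : \sum_v #|children v| = #|V|.-1.
Proof.
have -> : #|V|.-1 = \sum_(c | c != r) 1.
  by rewrite sum1_card cardC1.
rewrite [RHS](partition_big par xpredT) //=; apply: eq_bigr => v _.
by rewrite sum1_card; apply: eq_card => c; rewrite !inE.
Qed.

Lemma sum_deg : \sum_v deg e v = (#|V|.-1).*2.
Proof.
rewrite (eq_bigr _ (fun v _ => deg_children v)) big_split /= sum_children.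
rewrite -addnn; congr (_ + _).
rewrite -(cardC1 r) -sum1_card [RHS]big_mkcond /=; apply: eq_bigr => v _.
by rewrite !inE; case: (v != r).
Qed.

Lemma dr_par v : dr (par v) = (dr v).-1.
Proof.
case: (eqVneq v r) => [->|vr]; first by rewrite par_r dr_r.
by have [_ <-] := par_edge vr.
Qed.

Lemma dr_iter i v : dr (iter i par v) = dr v - i.
Proof. by elim: i => [|i IH]; rewrite ?subn0 //= dr_par IH subnS. Qed.

Lemma iter_r i : iter i par r = r.
Proof. by elim: i => //= i ->; rewrite par_r. Qed.

Lemma iter_ge i v : dr v <= i -> iter i par v = r.
Proof. by move=> h; apply: dr0; rewrite dr_iter; apply/eqP; rewrite subn_eq0. Qed.

Definition anc t v := (dr t <= dr v) && (iter (dr v - dr t) par v == t).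

Lemma ancP i t v : iter i par v = t -> i <= dr v -> anc t v.
Proof.
move=> it iv; have dt : dr t = dr v - i by rewrite -it dr_iter.
by rewrite /anc dt leq_subr subKn // it eqxx.
Qed.

Lemma anc_iter t v : anc t v -> iter (dr v - dr t) par v = t.
Proof. by case/andP => _ /eqP. Qed.

Lemma anc_dr t v : anc t v -> dr t <= dr v.
Proof. by case/andP. Qed.

Lemma anc_refl v : anc v v.
Proof. by rewrite /anc leqnn subnn eqxx. Qed.

Lemma anc_r v : anc r v.
Proof. by apply: (ancP (i := dr v)) => //; rewrite iter_ge. Qed.

Lemma anc_same a b v : anc a v -> anc b v -> dr a = dr b -> a = b.
Proof. by move=> ha hb ee; rewrite -(anc_iter ha) -(anc_iter hb) ee. Qed.

Lemma anc_par_l t x : x != r -> anc t (par x) -> anc t x.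
Proof.
move=> xr /andP[h /eqP it]; have [_ dp] := par_edge xr.
apply: (ancP (i := (dr x - dr t))); last exact: leq_subr.
have -> : dr x - dr t = (dr (par x) - dr t).+1 by lia.
by rewrite iterSr.
Qed.

Lemma anc_par_r t x : anc t x -> x != t -> anc t (par x).
Proof.
move=> /andP[h /eqP it] xt.
have ht : dr t < dr x.
  rewrite ltn_neqAle h andbT; apply/eqP => ee; move: it; rewrite ee subnn /= => xe.
  by rewrite xe eqxx in xt.
have xr : x != r by apply/eqP => xr; rewrite xr dr_r in ht.
have [_ dp] := par_edge xr.
apply: (ancP (i := (dr x - dr t).-1)).
  by rewrite -iterSr prednK ?subn_gt0.
rewrite dr_par; lia.
Qed.

Lemma anc_trans a b c : anc a b -> anc b c -> anc a c.
Proof.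
move=> ab bc; have hab := anc_dr ab; have hbc := anc_dr bc.
apply: (ancP (i := (dr b - dr a) + (dr c - dr b))); last lia.
by rewrite iterD (anc_iter bc) (anc_iter ab).
Qed.

Lemma dr_pos v : v != r -> 0 < dr v.
Proof. by move=> vr; rewrite lt0n; apply/eqP => /dr0 h; rewrite h eqxx in vr. Qed.

Lemma deg_r_pos u : u != r -> 0 < deg e r.
Proof.
move=> ur; have du := dr_pos ur.
pose c := iter (dr u).-1 par u.
have dc : dr c = 1 by rewrite /c dr_iter; lia.
have cr : c != r by apply/eqP => cr; rewrite cr dr_r in dc.
have pc : par c = r by rewrite /c -iterS prednK // iter_ge.
by rewrite deg_children eqxx addn0; apply/card_gt0P; exists c; rewrite inE cr pc eqxx.
Qed.

Hypothesis rleaf : deg e r = 1.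

Lemma deg_ge1 v : 0 < deg e v.
Proof.
case: (eqVneq v r) => [->|vr]; first by rewrite rleaf.
by rewrite deg_children vr addn1.
Qed.

Lemma deg2_nr v : deg e v = 2 -> v != r.
Proof. by move=> d2; apply/eqP => vr; rewrite vr rleaf in d2. Qed.

Lemma uniq_child x y : x != r -> y != r -> par x = par y -> deg e (par x) = 2 -> x = y.
Proof.
move=> xr yr pxy d2; have zr := deg2_nr d2.
move: d2; rewrite deg_children zr addn1 => /eqP; rewrite eqSS => /cards1P[c hc].
have : x \in children (par x) by rewrite inE xr eqxx.
have : y \in children (par x) by rewrite inE yr pxy eqxx.
by rewrite hc !inE => /eqP -> /eqP ->.
Qed.

Lemma child_ex v : v != r -> 2 <= deg e v -> exists c, c != r /\ par c = v.
Proof.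
move=> vr; rewrite deg_children vr addn1 ltnS => /card_gt0P[c].
by rewrite inE => /andP[cr /eqP pc]; exists c.
Qed.

Lemma mlen_ex c : exists i, deg e (iter i.+1 par c) != 2.
Proof. by exists (dr c); rewrite iter_ge // rleaf. Qed.

Definition mlen c := ex_minn (mlen_ex c).

Lemma mlen_deg c i : 0 < i <= mlen c -> deg e (iter i par c) = 2.
Proof.
case: i => // i /= ilt; rewrite /mlen in ilt *; move: ilt.
case: ex_minnP => m _ mmin ilt; apply/eqP/negPn/negP => h.
by have := mmin _ h; rewrite leqNgt ilt.
Qed.

Lemma mlen_stop c : deg e (iter (mlen c).+1 par c) != 2.
Proof. by rewrite /mlen; case: ex_minnP. Qed.

Lemma mlen_lt c : c != r -> mlen c < dr c.
Proof.
move=> cr; have d0 : 0 < dr c by rewrite lt0n; apply/eqP => /dr0 h; rewrite h eqxx in cr.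
rewrite /mlen; case: ex_minnP => m _ mmin.
have := mmin (dr c).-1; rewrite prednK // iter_ge // rleaf => /(_ isT) h.
by rewrite -ltnS prednK in h.
Qed.

Definition Bp := [set x | (deg e x != 2) && (x != r)].

Lemma chain_nr c k : c \in Bp -> k <= mlen c -> iter k par c != r.
Proof.
rewrite inE => /andP[_ cr]; case: k => // k hk.
by apply: deg2_nr; apply: mlen_deg.
Qed.

Lemma peel i x y : (forall k, k < i -> [/\ iter k par x != r, iter k par y != r &
   deg e (iter k.+1 par x) = 2]) -> iter i par x = iter i par y -> x = y.
Proof.
elim: i => [//|i IH] h /= eq; apply: IH => [k ki|]; first by apply: h; apply: ltnW.
have [h1 h2 h3] := h i (leqnn _).
by apply: uniq_child => //; rewrite -/(iter i.+1 par x).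
Qed.

Lemma chain_inj c c' a b : c \in Bp -> c' \in Bp -> 0 < a <= mlen c -> 0 < b <= mlen c' ->
  iter a par c = iter b par c' -> a = b /\ c = c'.
Proof.
wlog ab : c c' a b / a <= b.
  move=> W cB c'B ha hb eq; case: (leqP a b) => ab; first exact: W.
  by have [-> ->] := W c' c b a (ltnW ab) c'B cB hb ha (sym_equal eq).
move=> cB c'B /andP[a0 am] /andP[b0 bm] eq.
have ew : iter a par c = iter a par (iter (b - a) par c').
  by rewrite -iterD subnKC.
have cw := peel (i := a) _ ew.
have {}cw : c = iter (b - a) par c'.
  apply: cw => k ka; split.
  - by apply: chain_nr => //; lia.
  - by rewrite -iterD; apply: chain_nr => //; lia.
  - by apply: mlen_deg; lia.
case: (ltnP a b) => ab'.
  move: cB; rewrite inE cw mlen_deg ?eqxx //; lia.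
have abe : a = b by lia.
by split => //; rewrite cw abe subnn.
Qed.

Lemma D_cover v : deg e v = 2 ->
  exists c a, [/\ c \in Bp, 0 < a <= mlen c & iter a par c = v].
Proof.
move=> dv.
pose X := [set w | anc v w && [forall k : 'I_(dr w - dr v).+1, deg e (iter k par w) == 2]].
have vX : v \in X.
  rewrite inE anc_refl; apply/forallP => [[k hk]] /=; move: hk; rewrite subnn ltnS leqn0.
  by move/eqP => ->; rewrite dv.
case: (arg_maxnP dr vX) => w wX wmax; have wX' : w \in X := wX; move: wX'; rewrite inE => /andP[avw /forallP fw].
have dw : deg e w = 2 by have := fw ord0; move/eqP.
have wr := deg2_nr dw.
case: (child_ex wr (eq_leq (sym_equal dw))) => c [cr pc].
have [_ dc] := par_edge cr; rewrite pc in dc.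
have hiter j : j <= dr w - dr v -> iter j.+1 par c = iter j par w by rewrite iterSr pc.
have dvw := anc_dr avw.
have cB : c \in Bp.
  rewrite inE cr andbT; apply/negP => /eqP dc2.
  have : c \in X.
    rewrite inE (anc_trans avw (ancP (i := 1) _ _)) /=; last by rewrite -dc.
      apply/forallP => [[[|k] hk]]; first by rewrite /= dc2.
      change (deg e (iter k.+1 par c) == 2).
      have hk' : k < (dr w - dr v).+1 by rewrite -dc in hk; lia.
      by rewrite hiter ?(fw (Ordinal hk')) //; lia.
    by rewrite pc.
  by move/wmax => /= h; move: h; rewrite -dc; lia.
exists c, (dr c - dr v); split => //.
  apply/andP; split; first by rewrite -dc; lia.
  rewrite leqNgt; apply/negP => hm.
  have := mlen_stop c; rewrite hiter; last by rewrite -dc in hm; lia.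
  have hmk : mlen c < (dr w - dr v).+1 by rewrite -dc in hm; lia.
  by rewrite (eqP (fw (Ordinal hmk))).
have -> : dr c - dr v = (dr w - dr v).+1 by rewrite -dc; lia.
by rewrite hiter // (anc_iter avw).
Qed.

Lemma lip1 (f : V -> nat) : (forall x y, e x y -> f x <= (f y).+1) ->
  forall x s, path e x s -> f x <= f (last x s) + size s.
Proof.
move=> hf x s; elim: s x => [|y s IH] x /=; first by rewrite addn0.
case/andP => exy /IH h; have := hf _ _ exy; lia.
Qed.

Lemma lip2 (f : V -> nat) : (forall x y, e x y -> f x <= (f y).+1) ->
  forall x s, path e x s -> f (last x s) <= f x + size s.
Proof.
move=> hf x s; elim: s x => [|y s IH] x /=; first by rewrite addn0.
case/andP => exy /IH h; have := hf _ _ (esym_eq exy); lia.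
Qed.

Variable th : nat.

Definition isTop x := (x == r) || ((x \in Bp) && (th <= mlen x)).

Lemma topidx_ex v : exists j, isTop (iter j par v).
Proof. by exists (dr v); rewrite iter_ge // /isTop eqxx. Qed.

Definition topidx v := ex_minn (topidx_ex v).
Definition top v := iter (topidx v) par v.

Lemma top_isTop v : isTop (top v).
Proof. by rewrite /top /topidx; case: ex_minnP. Qed.

Lemma topidx_le v : topidx v <= dr v.
Proof.
rewrite /topidx; case: ex_minnP => m _ mm; apply: mm.
by rewrite iter_ge // /isTop eqxx.
Qed.

Lemma anc_top v : anc (top v) v.
Proof. exact: (ancP (i := topidx v)) (topidx_le v). Qed.

Lemma top_first u v : anc u v -> isTop u -> dr u <= dr (top v).
Proof.
move=> auv tu; rewrite /top dr_iter.
have hu := anc_dr auv.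
have : topidx v <= dr v - dr u.
  rewrite /topidx; case: ex_minnP => m _ mm; apply: mm.
  by rewrite (anc_iter auv).
lia.
Qed.

Lemma top_top v : isTop v -> top v = v.
Proof.
move=> tv; rewrite /top /topidx; case: ex_minnP => m _ mm.
by have := mm 0 tv; rewrite leqn0 => /eqP ->.
Qed.

Lemma top_par x : ~~ isTop x -> top x = top (par x).
Proof.
move=> ntx; have xr : x != r by apply: contraNneq ntx => ->; rewrite /isTop eqxx.
have a2 : anc (top (par x)) x := anc_par_l xr (anc_top _).
have h1 := top_first a2 (top_isTop _).
have xt : x != top x by apply: contraNneq ntx => {1}->; exact: top_isTop.
have a1 : anc (top x) (par x) := anc_par_r (anc_top x) xt.
have h2 := top_first a1 (top_isTop _).
apply: (anc_same (anc_top x) a2); lia.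
Qed.

Definition gt t v := if anc t v then 0
  else if anc v t && (dr t - dr v <= mlen t) then dr t - dr v else (mlen t).+1.

Lemma gt_par t x : t \in Bp -> x != r ->
  gt t (par x) <= (gt t x).+1 /\ gt t x <= (gt t (par x)).+1.
Proof.
move=> tB xr; have [ep dp] := par_edge xr.
have tr : t != r by move: tB; rewrite inE => /andP[].
rewrite /gt; case atx: (anc t x).
  case: (eqVneq x t) => [xt|xt].
    subst x; have -> : anc t (par t) = false.
      by apply/negP => /anc_dr; rewrite -dp ltnn.
    rewrite (ancP (i := 1) (t := par t) (v := t)) //=; last by rewrite -dp.
    by rewrite -dp subSnn; case: (mlen t).
  by rewrite (anc_par_r atx xt).
have -> : anc t (par x) = false by apply/negP => /(anc_par_l xr); rewrite atx.
have axx : anc (par x) x by apply: (ancP (i := 1)); rewrite // -dp.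
case hx: (anc x t && (dr t - dr x <= mlen t)).
  case/andP: hx => axt hm.
  rewrite (anc_trans axx axt) /=.
  have := anc_dr axt; have xt : x != t by apply: contraFneq atx => ->; exact: anc_refl.
  have dxt : dr x < dr t.
    rewrite ltn_neqAle (anc_dr axt) andbT; apply: contraNneq xt => ee.
    by rewrite (anc_same axt (anc_refl t) ee).
  by case: ifP; lia.
case hp: (anc (par x) t && (dr t - dr (par x) <= mlen t)); last by [].
case/andP: hp => apt hj.
have hn := negbT hx.
exfalso; move: hn => /negP; apply.
have dpt := anc_dr apt.
have j0 : 0 < dr t - dr (par x).
  rewrite subn_gt0 ltn_neqAle dpt andbT; apply/negP => /eqP ee.
  have := anc_same apt (anc_refl t) ee => pxt.
  by rewrite -pxt axx in atx.
set j := dr t - dr (par x) in j0 hj.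
have itj : iter j par t = par x by rewrite /j (anc_iter apt).
have xe : x = iter j.-1 par t.
  apply: uniq_child => //.
  - by apply: chain_nr => //; lia.
  - by rewrite -iterS prednK // itj.
  - by rewrite -itj; apply: mlen_deg; rewrite j0 hj.
have j1 : j.-1 != 0.
  by apply/negP => /eqP j1; move: atx; rewrite xe j1 /= anc_refl.
rewrite xe; apply/andP; split.
  by apply: (ancP (i := j.-1)) => //; rewrite /j; lia.
rewrite dr_iter; have := mlen_lt tr; lia.
Qed.

Lemma gt_lip t : t \in Bp -> forall x y, e x y -> gt t x <= (gt t y).+1.
Proof.
move=> tB x y /edge_par [[-> xr]|[-> yr]]; by have [] := gt_par tB (x := _) (ltac:(eassumption)).
Qed.

Lemma gt_vals t a b : t \in Bp -> anc t a -> ~~ anc t b -> deg e b = 1 ->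
  gt t a = 0 /\ gt t b = (mlen t).+1.
Proof.
move=> tB ata natb db; rewrite /gt ata (negbTE natb); split => //.
case: ifP => // /andP[abt hm]; exfalso.
have tb : dr t - dr b != 0.
  apply/negP => /eqP h0; move: natb; rewrite -(anc_iter abt) h0 /=.
  by rewrite anc_refl.
have := mlen_deg (c := t) (i := dr t - dr b); rewrite (anc_iter abt) db.
by rewrite lt0n tb hm => /(_ isT).
Qed.

Lemma S_walk t a b p : t \in Bp -> th <= mlen t -> anc t a -> ~~ anc t b -> deg e b = 1 ->
  (path e a p -> last a p = b -> th < size p) /\
  (path e b p -> last b p = a -> th < size p).
Proof.
move=> tB hm ata natb db; have [ga gb] := gt_vals tB ata natb db.
split => pp lp.
  have := lip2 (gt_lip tB) pp; rewrite lp ga gb; lia.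
have := lip1 (gt_lip tB) pp; rewrite lp ga gb; lia.
Qed.

Lemma top_Bp t : isTop t -> t != r -> t \in Bp /\ th <= mlen t.
Proof. by rewrite /isTop => /orP[/eqP ->|/andP[-> ->]]; rewrite ?eqxx. Qed.

Lemma sep_leaves l l' : deg e l = 1 -> deg e l' = 1 -> top l != top l' ->
  forall p, path e l p -> last l p = l' -> th < size p.
Proof.
move=> dl dl' tt p pp lp.
have T1 := top_isTop l; have T2 := top_isTop l'.
case: (eqVneq (top l) r) => [t1r|t1r].
  have t2r : top l' != r by rewrite -t1r eq_sym.
  have [tB hm] := top_Bp T2 t2r.
  have nal : ~~ anc (top l') l.
    apply/negP => a; have := top_first a T2; rewrite t1r dr_r leqn0 => /eqP /dr0.
    by apply/eqP.
  by have [_ H] := S_walk p tB hm (anc_top l') nal dl; apply: H.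
have [tB hm] := top_Bp T1 t1r.
case al': (anc (top l) l').
  have h1 := top_first al' T1.
  have t2r : top l' != r.
    by apply: contraNneq t1r => ee; move: h1; rewrite ee dr_r leqn0 => /eqP /dr0 ->.
  have [tB' hm'] := top_Bp T2 t2r.
  have nal : ~~ anc (top l') l.
    apply/negP => a; have h2 := top_first a T2.
    by move/eqP: tt; apply; apply: (anc_same al' (anc_top l')); lia.
  by have [_ H] := S_walk p tB' hm' (anc_top l') nal dl; apply: H.
by have [H _] := S_walk p tB hm (anc_top l) (negbT al') dl'; apply: H.
Qed.

Definition Tp := [set x | isTop x].
Definition Tp' := [set x | isTop x && (x != r)].
Definition At := [set t in Tp | [exists l, (deg e l == 1) && (top l == t)]].
Definition pickl t := odflt r [pick l | (deg e l == 1) && (top l == t)].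
Definition Qs := [set pickl t | t in At].

Lemma pickl_spec t : t \in At -> deg e (pickl t) = 1 /\ top (pickl t) = t.
Proof.
rewrite inE => /andP[_ /existsP[l hl]]; rewrite /pickl; case: pickP => [l' /andP[/eqP -> /eqP ->] //|].
by move=> /(_ l); rewrite hl.
Qed.

Lemma card_Qs : #|Qs| = #|At|.
Proof.
apply: card_in_imset => t t' ht ht' ee.
by rewrite -(pickl_spec ht).2 -(pickl_spec ht').2 ee.
Qed.

Lemma Qs_leaves : Qs \subset leaves e.
Proof.
apply/subsetP => x /imsetP[t ht ->]; rewrite inE /is_leaf.
by rewrite (pickl_spec ht).1.
Qed.

Lemma Qs_sep : separated e th.+1 Qs.
Proof.
move=> x y /imsetP[t ht ->] /imsetP[t' ht' ->] xy p pp lp.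
have [d1 t1] := pickl_spec ht; have [d2 t2] := pickl_spec ht'.
apply: (sep_leaves d1 d2) pp lp; rewrite t1 t2.
by apply: contraNneq xy => ->.
Qed.

Lemma r_At : r \in At.
Proof.
rewrite inE; apply/andP; split; first by rewrite inE /isTop eqxx.
by apply/existsP; exists r; rewrite rleaf eqxx /= top_top // /isTop eqxx.
Qed.

Lemma find_c t ch : par ch = t -> ch != r -> t \notin At -> isTop t ->
  exists c, [/\ isTop c, c != r, top (par c) = t & anc ch c].
Proof.
move=> pch chr tA Tt.
case Tch: (isTop ch).
  by exists ch; rewrite Tch chr pch top_top // anc_refl.
pose X := [set v | anc ch v && (top v == t)].
have chX : ch \in X by rewrite inE anc_refl top_par ?Tch // pch top_top ?eqxx.
case: (arg_maxnP dr chX) => w wX wmax.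
have wX' : w \in X := wX; move: wX'; rewrite inE => /andP[aw /eqP tw].
have wr : w != r.
  apply/eqP => wr; move: (anc_dr aw); rewrite wr dr_r leqn0 => /eqP /dr0.
  by move/eqP: chr.
have dw : 2 <= deg e w.
  have := deg_ge1 w; rewrite leq_eqVlt => /orP[/eqP d1|//].
  case/negP: tA; rewrite inE /Tp inE Tt /=; apply/existsP; exists w.
  by rewrite -d1 tw !eqxx.
case: (child_ex wr dw) => c [cr pc].
have [_ dc] := par_edge cr; rewrite pc in dc.
have ac : anc ch c.
  apply: (anc_trans aw); apply: (ancP (i := 1)); rewrite //= -dc //.
case Tc: (isTop c).
  by exists c; rewrite Tc cr pc tw.
have : c \in X by rewrite inE ac /= top_par ?Tc // pc tw.
by move/wmax => /= h; move: h; rewrite -dc; lia.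
Qed.

Lemma many_children t : isTop t -> t \notin At ->
  1 < #|[set c | isTop c && (c != r) && (top (par c) == t)]|.
Proof.
move=> Tt tA.
have tr : t != r by apply: contraNneq tA => ->; exact: r_At.
have dt : 3 <= deg e t.
  have [tB _] := top_Bp Tt tr; move: tB; rewrite inE => /andP[d2 _].
  have d1 : deg e t != 1.
    apply: contraNneq tA => d1; rewrite inE /Tp inE Tt /=; apply/existsP; exists t.
    by rewrite d1 (top_top Tt) !eqxx.
  have := deg_ge1 t; move: d1 d2; lia.
move: dt; rewrite deg_children tr addn1 ltnS => /card_gt1P[c1 [c2 [h1 h2 c12]]].
move: h1 h2; rewrite !inE => /andP[c1r /eqP p1] /andP[c2r /eqP p2].
case: (find_c p1 c1r tA Tt) => d1 [T1 d1r t1 a1].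
case: (find_c p2 c2r tA Tt) => d2 [T2 d2r t2 a2].
apply/card_gt1P; exists d1, d2; rewrite !inE T1 T2 d1r d2r t1 t2 eqxx; split => //.
apply: contraNneq c12 => ee; subst d2.
apply/eqP; apply: (anc_same a1 a2).
have [_ e1] := par_edge c1r; have [_ e2] := par_edge c2r.
by rewrite p1 in e1; rewrite p2 in e2; rewrite -e1 -e2.
Qed.

Lemma tops_count : #|Tp'| + 2 <= 2 * #|At|.
Proof.
pose F t := #|[set c | isTop c && (c != r) && (top (par c) == t)]|.
have E : #|Tp'| = \sum_(t in Tp) F t.
  rewrite -sum1_card (partition_big (fun c => top (par c)) (mem Tp)); last first.
    by move=> c _; rewrite /= /Tp inE top_isTop.
  apply: eq_bigr => t _; rewrite sum1_card /F; apply: eq_card => c.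
  by rewrite unfold_in /= inE /Tp' inE.
have H2 : 2 * #|Tp :\: At| <= #|Tp'|.
  rewrite E (big_setID At) /= -[X in X <= _]add0n leq_add //.
  rewrite mulnC -sum_nat_const; apply: leq_sum => t; rewrite in_setD => /andP[tA Tt].
  by apply: many_children; rewrite // inE in Tt.
have sAT : At \subset Tp by apply/subsetP => x; rewrite inE => /andP[].
have H3 : #|Tp :\: At| = #|Tp| - #|At| by rewrite cardsD (setIidPr sAT).
have H4 : #|Tp| = #|Tp'| + 1.
  rewrite (cardD1 r) inE /isTop eqxx addnC; congr (_ + _); apply: eq_card => x.
  by rewrite !inE andbC.
have H5 : #|At| <= #|Tp|.
  exact: subset_leq_card.
lia.
Qed.

Lemma sum_bool (P : pred V) : \sum_v (P v : nat) = #|P|.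
Proof. by rewrite -sum1_card [RHS]big_mkcond; apply: eq_bigr => v _; rewrite unfold_in; case: (P v). Qed.

Lemma sum_ord_lt N q : \sum_(j < N) (j < q : nat) = minn N q.
Proof.
elim: N => [|N IH]; first by rewrite big_ord0 min0n.
rewrite big_ord_recr /= IH; rewrite /minn.
by case: (ltnP N q) => h /=; case: ifP => ?; lia.
Qed.

Lemma cnt_pairs (P : pred V) (f : V -> nat) :
  (forall c, P c -> f c <= #|V|) ->
  #|[set x : V * 'I_#|V| | P x.1 && (x.2 < f x.1)]| = \sum_(c | P c) f c.
Proof.
move=> hf; rewrite -sum1_card.
rewrite (eq_bigl (fun x : V * 'I_#|V| => P x.1 && (x.2 < f x.1))); last by move=> x; rewrite inE.
rewrite -(pair_big_dep P (fun c (j : 'I_#|V|) => j < f c) (fun _ _ => 1)) /=.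
apply: eq_bigr => c Pc; rewrite big_mkcond /= sum_ord_lt.
by apply/minn_idPr; apply: hf.
Qed.

Lemma chain_path x a m : (forall i, a <= i < a + m -> iter i par x != r) ->
  path e (iter a par x) [seq iter i par x | i <- iota a.+1 m].
Proof.
elim: m a => [//|m IH] a h /=; apply/andP; split.
  by have [] := par_edge (h a _); rewrite ?leqnn ?addnS ?ltnS ?leq_addr.
apply: IH => i /andP[h1 h2]; apply: h; apply/andP; split; first exact: ltnW.
by rewrite addnS.
Qed.

Variable k : nat.

Definition mkpath c j := [seq iter a par c | a <- iota (j * k.+1).+1 k.+1].

Lemma mkpath_mem c j x : x \in mkpath c j ->
  exists2 a, (j * k.+1 < a <= j * k.+1 + k.+1) & x = iter a par c.
Proof. by case/mapP => a; rewrite mem_iota addSn ltnS => ha ->; exists a. Qed.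

Lemma mkpath_bare c j : c \in Bp -> j.+1 * k.+1 <= mlen c ->
  is_bare_path e (mkpath c j) /\ size (mkpath c j) = k.+1.
Proof.
move=> cB hj.
have hrange a : j * k.+1 < a <= j * k.+1 + k.+1 -> 0 < a <= mlen c.
  move=> /andP[h1 h2]; apply/andP; split; first by apply: leq_ltn_trans h1.
  by apply: (leq_trans h2); rewrite -mulSnr.
have alldeg x : x \in mkpath c j -> deg e x = 2.
  by case/mkpath_mem => a /hrange ha ->; apply: mlen_deg.
split; last by rewrite size_map size_iota.
split; last first.
  move=> i _ hi x0; apply: alldeg; apply: mem_nth; move: hi; rewrite size_map size_iota; lia.
rewrite /is_gpath.
change (path e (iter (j * k.+1).+1 par c) [seq iter a par c | a <- iota (j * k.+1).+2 k]
   && uniq (mkpath c j)); apply/andP; split.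
  apply: chain_path => i /andP[h1 h2]; apply: chain_nr => //.
  move: hj; rewrite mulSnr; lia.
rewrite map_inj_in_uniq ?iota_uniq //.
move=> a b ha hb ee.
have ha' := hrange a; have hb' := hrange b.
move: ha hb; rewrite !mem_iota addSn ltnS => ha hb.
have := congr1 dr ee; rewrite !dr_iter.
have := mlen_lt (c := c); rewrite inE in cB; case/andP: cB => _ cr => /(_ cr).
have := ha' ha; have := hb' hb; lia.
Qed.

Lemma mkpath_disj c j c' j' : c \in Bp -> c' \in Bp -> j.+1 * k.+1 <= mlen c ->
  j'.+1 * k.+1 <= mlen c' -> (c, j) != (c', j') -> [disjoint mkpath c j & mkpath c' j'].
Proof.
move=> cB c'B hj hj' neq; apply/pred0P => x /=; apply/negP => /andP[].
case/mkpath_mem => a ha -> /mkpath_mem [b hb eab].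
have ra : 0 < a <= mlen c.
  case/andP: ha => h1 h2; apply/andP; split; first by apply: leq_ltn_trans h1.
  by apply: (leq_trans h2); rewrite -mulSnr.
have rb : 0 < b <= mlen c'.
  case/andP: hb => h1 h2; apply/andP; split; first by apply: leq_ltn_trans h1.
  by apply: (leq_trans h2); rewrite -mulSnr.
have [ab cc] := chain_inj cB c'B ra rb eab; subst b c'.
move/negP: neq; apply; rewrite xpair_eqE eqxx /=; apply/eqP.
case/andP: ha => ha1 ha2; case/andP: hb => hb1 hb2.
case: (ltngtP j j') => // hjj; exfalso.
  have : j.+1 * k.+1 <= j' * k.+1 by rewrite leq_mul2r hjj orbT.
  rewrite mulSnr; lia.
have : j'.+1 * k.+1 <= j * k.+1 by rewrite leq_mul2r hjj orbT.
rewrite mulSnr; lia.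
Qed.

Definition Dset := [set x | deg e x == 2].
Definition Bset := [set x | deg e x != 2].

Lemma card_B_D : #|Bset| + #|Dset| = #|V|.
Proof.
rewrite -(cardsC Bset); congr (_ + _); apply: eq_card => x; rewrite !inE.
by case: (deg e x == 2).
Qed.

Lemma mlen_le c : c \in Bp -> mlen c <= #|V|.
Proof.
rewrite inE => /andP[_ cr]; apply: ltnW; apply: leq_trans (mlen_lt cr) _.
exact: ltnW (dr_lt c).
Qed.

Lemma D_le : #|Dset| <= \sum_(c in Bp) mlen c.
Proof.
rewrite -(cnt_pairs (P := mem Bp)) //; last exact: mlen_le.
set S2 := [set x : V * 'I_#|V| | _].
apply: (leq_trans _ (leq_imset_card (fun x : V * 'I_#|V| => iter x.2.+1 par x.1) S2)).
apply: subset_leq_card; apply/subsetP => v; rewrite inE => /eqP dv.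
case: (D_cover dv) => c [a [cB /andP[a0 am] <-]].
have ha : a.-1 < #|V| by have := mlen_le cB; lia.
apply/imsetP; exists (c, Ordinal ha); first by rewrite inE /= cB /=; lia.
by change (iter a par c = iter a.-1.+1 par c); rewrite prednK.
Qed.

Lemma B_le : #|Bset| + 2 <= 2 * #|leaves e|.
Proof.
have sd := sum_deg.
have h3 : \sum_(v : V) 3 <= \sum_v (deg e v + (deg e v == 1) + (deg e v == 1) + (deg e v == 2)).
  apply: leq_sum => v _; have := deg_ge1 v.
  case: (eqVneq (deg e v) 1) => [->//|d1]; case: (eqVneq (deg e v) 2) => [->//|d2].
  move: d1 d2; rewrite /=; lia.
rewrite !big_split /= sd !sum_bool sum_nat_const in h3.
have hl : #|leaves e| = #|(fun v => deg e v == 1)|.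
  by apply: eq_card => x; rewrite inE.
have hd : #|Dset| = #|(fun v => deg e v == 2)|.
  by apply: eq_card => x; rewrite inE.
have := card_B_D; have := max_card (mem [set r]); rewrite cards1.
have hT : #|(xpredT : pred V)| = #|V| by apply: eq_card.
move: h3; rewrite -hl -hd hT; lia.
Qed.

Definition Sp := [set x : V * 'I_#|V| | (x.1 \in Bp) && (x.2 < mlen x.1 %/ k.+1)].
Definition Ps := [seq mkpath x.1 x.2 | x : V * 'I_#|V| <- enum Sp].

Lemma Sp_bound x : x \in Sp -> x.1 \in Bp /\ x.2.+1 * k.+1 <= mlen x.1.
Proof. by rewrite inE => /andP[-> h]; rewrite -leq_divRL. Qed.

Lemma size_Ps : size Ps = \sum_(c in Bp) mlen c %/ k.+1.
Proof.
rewrite size_map -cardE.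
apply: (cnt_pairs (P := fun c => c \in Bp) (f := fun c => mlen c %/ k.+1)) => c cB.
by apply: leq_trans (leq_div _ _) (mlen_le cB).
Qed.

Lemma Ps_ok : disjoint_bare_paths e k Ps.
Proof.
split.
  move=> s /mapP[x]; rewrite mem_enum => /Sp_bound [xB hx] ->.
  exact: mkpath_bare.
move=> i j hi hj ij; rewrite size_map in hi hj.
pose x0 := (r, Ordinal (dr_lt r)).
have xS : nth x0 (enum Sp) i \in Sp by rewrite -mem_enum mem_nth.
have yS : nth x0 (enum Sp) j \in Sp by rewrite -mem_enum mem_nth.
have xy : nth x0 (enum Sp) i != nth x0 (enum Sp) j by rewrite nth_uniq ?enum_uniq.
rewrite !(nth_map x0) //.
have [xB hx] := Sp_bound xS; have [yB hy] := Sp_bound yS.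
apply: mkpath_disj => //.
Qed.

End Tree.

Lemma arith_c th k m : m <= th.-1 + k * (th <= m) + 2 * k.+1 * (m %/ k.+1).
Proof.
case: (leqP m k) => hmk.
  move: (m %/ k.+1) => q; case: (leqP th m) => h /=; nia.
have q1 : 0 < m %/ k.+1 by rewrite divn_gt0.
have := divn_eq m k.+1; have := ltn_pmod m (ltn0Sn k).
set q := m %/ k.+1; set rr := m %% k.+1; nia.
Qed.

Theorem lemma3p16 (n k d : nat) (V : finType) (e : rel V) :
  0 < d ->
  60 * k <= n -> 4 * d <= k ->
  is_tree e -> #|V| = n ->
  #|leaves e| * (5 * d) <= n ->
  (exists Q : {set V}, Q \subset leaves e /\ separated e (2 * d) Q /\
       n <= #|Q| * (40 * k))
  \/
  (exists P : seq (seq V), disjoint_bare_paths e k P /\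
       n <= size P * (40 * k)).
Proof.
move=> d0 hn hk [[esym eirr] [econn eacyc]] hV hL.
have V1 : 1 < #|V| by lia.
have [r0 _] : exists r0 : V, true by case/card_gt0P: (ltnW V1) => x _; exists x.
have [r rleaf] : exists r, deg e r = 1.
  have sd := sum_deg esym eirr econn eacyc r0.
  have [v hv] : exists v, deg e v <= 1.
    case: (pickP (fun v => deg e v <= 1)) => [v hv|H]; first by exists v.
    have : \sum_(v : V) 2 <= \sum_v deg e v.
      by apply: leq_sum => v _; move: (H v); rewrite /= leqNgt => /negbFE.
    rewrite sd sum_nat_const.
    have hT : #|(xpredT : pred V)| = #|V| by apply: eq_card.
    rewrite hT; lia.
  have [u uv] : exists u, u != v.
    have : 1 < #|V| := V1; rewrite (cardD1 v) => /card_gt0P[u]; rewrite !inE => /andP[uv _].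
    by exists u.
  have := deg_r_pos esym eirr econn eacyc uv.
  by exists v; apply/eqP; rewrite eqn_leq hv.
pose th := (2 * d).-1.
pose Q := Qs esym econn rleaf th. pose P := Ps esym econn rleaf k.
case: (leqP n (#|Q| * (40 * k))) => hq.
  left; exists Q; split; first exact: Qs_leaves. split => //.
  have -> : 2 * d = th.+1 by rewrite /th prednK //; lia.
  exact: (@Qs_sep V e esym eirr econn eacyc r rleaf th).
case: (leqP n (size P * (40 * k))) => hp.
  by right; exists P; split => //; exact: Ps_ok.
exfalso.
have h1 := card_B_D e. have h2 := D_le esym eirr econn eacyc rleaf.
set ml := mlen esym econn rleaf in h2 *.
have h3 : \sum_(c in Bp e r) ml c <= #|Bp e r| * th.-1 + k * #|Tp' esym econn rleaf th| + 2 * k.+1 * size P.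
  rewrite size_Ps -/ml.
  have hs : \sum_(c in Bp e r) ml c <= \sum_(c in Bp e r)
      (th.-1 + k * (th <= ml c) + 2 * k.+1 * (ml c %/ k.+1)).
    by apply: leq_sum => c _; exact: arith_c.
  have hb : \sum_(c in Bp e r) (th <= ml c : nat) = #|Tp' esym econn rleaf th|.
    rewrite -big_mkcondr /= sum1_card; apply: eq_card => c; rewrite !inE /isTop.
    case: (eqVneq c r) => [->|cr] /=; rewrite unfold_in /= inE.
      by rewrite eqxx andbF.
    by rewrite andbT.
  apply: (leq_trans hs); rewrite !big_split sum_nat_const -!big_distrr hb.
  by [].
have h4 := tops_count esym eirr econn eacyc rleaf th.
have h5 := card_Qs esym econn rleaf th.
have h6 := B_le esym eirr econn eacyc rleaf.
have h7 : #|Bp e r| <= #|Bset e|.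
  by apply: subset_leq_card; apply/subsetP => x; rewrite !inE => /andP[].
rewrite -/Q in h5.
move: h1 h2 h3 h4 h5 h6 h7 hq hp hL.
have thv : th.-1 = 2 * d - 2 by rewrite /th; lia.
rewrite thv hV.
move: #|Bset e| #|Dset e| (\sum_(c in Bp e r) ml c) #|Bp e r| #|Tp' esym econn rleaf th|
  #|At esym econn rleaf th| #|Q| (size P) #|leaves e| => B D S Bq T A q p L.
move=> h1 h2 h3 h4 h5 h6 h7 hq hp hL.
have X1 : Bq * (2 * d - 2) <= (2 * L) * (2 * d - 2) by apply: leq_mul; lia.
have X2 : k * T <= k * (2 * q) by apply: leq_mul; lia.
have X3 : 4 * p <= k * p by apply: leq_mul; lia.
nia.
Qed.
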